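(* Let $X$ be a separable $F$-space and let $A$ be a densely defined closed linear operator in $X$ such that $A^r$ is a closed operator for every positive integer $r$. Suppose there are a dense subset $X_0\subset D(A^\infty):=\bigcap_{n\ge 0}D(A^n)$ of $X$ and a mapping $B:X_0\to X_0$ such that: (1) $ABx=x$ for all $x\in X_0$; (2) $\sum_{n=1}^\infty A^n x$ converges unconditionally for all $x\in X_0$; (3) $\sum_{n=1}^\infty B^n x$ converges unconditionally for all $x\in X_0$. Then $A$ is frequently hypercyclic.
   Context: An $F$-space is a topological vector space over $\mathbb{K}\in\{\mathbb{R},\mathbb{C}\}$ whose topology is given by a complete translation-invariant metric, equivalently by an $F$-norm $\|\cdot\|$ (satisfying $\|x\|=0\iff x=0$; $\|\lambda x\|\le\|x\|$ for $|\lambda|\le1$; $\lim_{\lambda\to0}\|\lambda x\|=0$; $\|x+y\|\le\|x\|+\|y\|$). A series $\sum_k x_k$ in $X$ converges unconditionally if for every $\varepsilon>0$ there is $N\ge1$ such that $\|\sum_{k\in F}x_k\|<\varepsilon$ for every finite $F\subset\mathbb{N}$ with $F\cap\{1,\dots,N\}=\emptyset$. The domain of $A^n$ is $D(A^n)=\{x: x,Ax,\dots,A^{n-1}x\in D(A)\}$. The lower density of $E\subset\mathbb{N}$ is $\underline{\mathrm{dens}}(E)=\liminf_{N\to\infty}\#(E\cap\{1,\dots,N\})/N$. A (possibly unbounded) densely defined operator $T$ in $X$ is frequently hypercyclic if there is a vector $f\in D(T)$ such that $T^nf\in D(T)$ for every $n\ge1$ and, for every non-empty open $U\subset X$, the set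 $\{n\in\mathbb{N}: T^nf\in U\}$ has positive lower density. *)

(* Defs.v *)
From mathcomp Require Import all_boot all_order all_algebra.
From mathcomp Require Import all_classical all_reals.
From mathcomp Require Import sequences.
From mathcomp.real_closed Require Import complex.

Set Implicit Arguments.
Unset Strict Implicit.
Unset Printing Implicit Defensive.

Import Order.TTheory GRing.Theory Num.Theory.
Local Open Scope classical_set_scope.
Local Open Scope ring_scope.

Section FSpaces.
Variables (R : realType) (K : numFieldType) (X : lmodType K).
Variable nrm : X -> R.

Definition is_Fnorm : Prop :=
  [/\ (forall x : X, nrm x = 0 <-> x = 0),
      (forall (l : K) (x : X), `|l| <= 1 -> nrm (l *: x) <= nrm x),
      (forall (x : X) (e : R), 0 < e ->
         exists d : K, 0 < d /\ forall l : K, `|l| < d -> nrm (l *: x) < e) &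
      (forall x y : X, nrm (x + y) <= nrm x + nrm y)].

Definition Fcomplete : Prop :=
  forall u : nat -> X,
    (forall e : R, 0 < e -> exists N : nat, forall m n : nat,
        (N <= m)%N -> (N <= n)%N -> nrm (u m - u n) < e) ->
    exists x : X, forall e : R, 0 < e -> exists N : nat, forall n : nat,
        (N <= n)%N -> nrm (u n - x) < e.

Definition Fdense (S : set X) : Prop :=
  forall (x : X) (e : R), 0 < e -> exists s : X, S s /\ nrm (s - x) < e.

Definition Fopen (U : set X) : Prop :=
  forall u : X, U u -> exists e : R, 0 < e /\ forall y : X, nrm (y - u) < e -> U y.

Definition Fseparable : Prop := exists S : set X, countable S /\ Fdense S.

Definition Fspace : Prop := is_Fnorm /\ Fcomplete.

(* Unbounded operators: a domain D and a map A (only meaningful on D). *)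
Definition linear_op (D : set X) (A : X -> X) : Prop :=
  [/\ D 0,
      (forall x y, D x -> D y -> D (x + y)),
      (forall (l : K) x, D x -> D (l *: x)),
      (forall x y, D x -> D y -> A (x + y) = A x + A y) &
      (forall (l : K) x, D x -> A (l *: x) = l *: A x)].

(* Closed operator: the graph {(x, A x) : x in D} is closed in X x X. *)
Definition closed_op (D : set X) (A : X -> X) : Prop :=
  forall x y : X,
    (forall e : R, 0 < e -> exists z : X, [/\ D z, nrm (z - x) < e & nrm (A z - y) < e]) ->
    D x /\ A x = y.

(* D(A^n) = {x : x, Ax, ..., A^(n-1) x in D(A)}; A^n acts as iter n A. *)
Definition dom_pow (D : set X) (A : X -> X) (n : nat) : set X :=
  fun x => forall k : nat, (k < n)%N -> D (iter k A x).

Definition dom_inf (D : set X) (A : X -> X) : set X :=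
  fun x => forall n : nat, dom_pow D A n x.

Definition uncond_conv (u : nat -> X) : Prop :=
  forall e : R, 0 < e -> exists N : nat, (1 <= N)%N /\
    forall s : seq nat, uniq s -> all (fun k => (N < k)%N) s ->
      nrm (\sum_(k <- s) u k) < e.

End FSpaces.

Definition lower_density (R : realType) (E : set nat) : \bar R :=
  limn_einf (fun N : nat =>
    ((\sum_(1 <= n < N.+1) (if `[< E n >] then 1 else 0 : R)) / N%:R)%:E).

Definition freq_hypercyclic (R : realType) (K : numFieldType) (X : lmodType K)
  (nrm : X -> R) (D : set X) (T : X -> X) : Prop :=
  exists f : X, D f /\ (forall n : nat, (1 <= n)%N -> D (iter n T f)) /\
    forall U : set X, Fopen nrm U -> U !=set0 ->
      (0 < lower_density R [set n | U (iter n T f)])%E.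

Definition theorem2p1_for (R : realType) (K : numFieldType) : Prop :=
  forall (X : lmodType K) (nrm : X -> R) (D : set X) (A : X -> X),
    Fspace nrm -> Fseparable nrm ->
    linear_op D A -> Fdense nrm D -> closed_op nrm D A ->
    (forall r : nat, (0 < r)%N -> closed_op nrm (dom_pow D A r) (iter r A)) ->
    forall (X0 : set X) (B : X -> X),
      X0 `<=` dom_inf D A -> Fdense nrm X0 ->
      (forall x, X0 x -> X0 (B x)) ->
      (forall x, X0 x -> A (B x) = x) ->
      (forall x, X0 x -> uncond_conv nrm (fun n => iter n A x)) ->
      (forall x, X0 x -> uncond_conv nrm (fun n => iter n B x)) ->
      freq_hypercyclic nrm D A.

(* Main.v *)
Require Import Defs.
From mathcomp Require Import all_boot all_order all_algebra.
From mathcomp Require Import all_classical all_reals.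
From mathcomp Require Import ereal topology normedtype sequences.
From mathcomp.real_closed Require Import complex.
From mathcomp Require Import zify ring lra.
Set Implicit Arguments.
Unset Strict Implicit.
Unset Printing Implicit Defensive.
Import Order.TTheory GRing.Theory Num.Theory.

Lemma count_iota_mono (p : pred nat) N M : N <= M -> count p (iota 0 N) <= count p (iota 0 M).
Proof.
move=> /subnK <-; rewrite addnC iotaD count_cat; exact: leq_addr.
Qed.

Lemma count_periodic (p : pred nat) q a : 0 < q ->
  count (fun n => p (n %% q)) (iota 0 (a * q)) = a * count p (iota 0 q).
Proof.
move=> q0; elim: a => [|a IH]; first by rewrite mul0n.
rewrite mulSn addnC iotaD count_cat IH add0n mulSn addnC; congr (_ + _).
rewrite -[a * q]addn0 iotaDl count_map; apply: eq_in_count => x.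
rewrite mem_iota /= => hx; rewrite modnMDl modn_small //.
Qed.

Lemma count_interval lo hi q :
  count (fun x => (lo <= x) && (x <= hi)) (iota 0 q) <= hi.+1 - lo.
Proof.
rewrite -size_filter -(size_iota lo (hi.+1 - lo)).
apply: uniq_leq_size; first by rewrite filter_uniq // iota_uniq.
move=> x; rewrite mem_filter mem_iota => /andP[/andP[h1 h2] _].
rewrite mem_iota; lia.
Qed.

Lemma count_has (T : eqType) (c : nat -> pred T) (J : seq nat) (s : seq T) :
  count (fun x => has (fun j => c j x) J) s <= \sum_(j <- J) count (c j) s.
Proof.
elim: J => [|j J IH]; first by rewrite big_nil count_pred0.
rewrite big_cons.
apply: (@leq_trans (count (predU (c j) (fun x => has (fun j => c j x) J)) s)).
  by apply: sub_count => x /=.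
rewrite -(leq_add2r (count (predI (c j) (fun x => has (fun j => c j x) J)) s)).
rewrite count_predUI -addnA leq_add2l; exact: leq_trans IH (leq_addr _ _).
Qed.

Lemma count_cover (T : eqType) (a b : pred T) (c : nat -> pred T) (J : seq nat) (s : seq T) :
  (forall x, x \in s -> a x -> b x || has (fun j => c j x) J) ->
  count a s <= count b s + \sum_(j <- J) count (c j) s.
Proof.
move=> h.
have -> : count a s = count (fun x => a x && (b x || has (fun j => c j x) J)) s.
  apply: eq_in_count => x xs /=; case ax: (a x) => //=; by rewrite h.
apply: (@leq_trans (count (predU b (fun x => has (fun j => c j x) J)) s)).
  by apply: sub_count => x /= /andP[].
rewrite -(leq_add2r (count (predI b (fun x => has (fun j => c j x) J)) s)).
rewrite count_predUI -addnA leq_add2l.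
exact: leq_trans (count_has _ _ _) (leq_addr _ _).
Qed.

Section Comb.
Variable Nf : nat -> nat.

Fixpoint P (j : nat) : nat := match j with
  | 0 => 2 * Nf 0 + 2
  | j'.+1 => 40 * (2 * Nf j'.+1 + 1) * 2 ^ j'.+1 * P j' end.
Definition Q j := 2 * P j.
Definition good j n := (n %% Q j + Nf j < P j) || (P j + Nf j < n %% Q j).
Definition E k n := (n %% Q k == P k) && all (fun j => good j n) (iota k.+1 (n - k)).

Lemma P_pos j : 0 < P j.
Proof.
elim: j => [|j IH] /=; first lia.
rewrite !muln_gt0 expn_gt0 IH; lia.
Qed.

Lemma P_big j : 2 * Nf j + j < P j.
Proof.
case: j => [/=|j]; first lia.
rewrite /=; have h1 := P_pos j.
have h2 : j.+2 <= 2 ^ j.+1 by rewrite ltn_expl.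
set a := 2 * Nf j.+1 + 1; set b := 2 ^ j.+1 in h2 *.
have h3 : a * b <= a * b * P j by rewrite leq_pmulr.
have h4 : a * j.+2 <= a * b by rewrite leq_mul2l h2 orbT.
rewrite -mulnA -mulnA mulnA; nia.
Qed.


Lemma P_mono j : P j <= P j.+1.
Proof.
rewrite /= leq_pmull // !muln_gt0 expn_gt0; lia.
Qed.

Lemma Q_mono k j : k <= j -> Q k <= Q j.
Proof.
move=> /subnK <-; elim: (j - k) => [|d IH]; first by [].
rewrite addSn /Q; have := P_mono (d + k); rewrite /Q in IH; lia.
Qed.

Lemma Q_big k j : k < j -> 5 * (2 * Nf j + 1) * 2 ^ j.+1 * Q k <= Q j.
Proof.
case: j => [//|j] kj; have := Q_mono (ltnSE kj); rewrite /Q /= => h.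
rewrite expnS.
set a := 2 * Nf j.+1 + 1; set b := 2 ^ j.+1.
have : a * b * (2 * P k) <= a * b * (2 * P j) by rewrite leq_mul2l h orbT.
lia.
Qed.

Lemma E_low k n : E k n -> 2 * Nf k + k < n.
Proof.
case/andP=> /eqP h _; have := leq_mod n (Q k); have := P_big k; lia.
Qed.

Lemma sepmod n m Qj Pj N : Qj = 2 * Pj -> N < Pj ->
  m %% Qj = Pj -> (n %% Qj + N < Pj) || (Pj + N < n %% Qj) ->
  (n + N < m) || (m + N < n).
Proof.
move=> hQ hN hm hg.
have hn := divn_eq n Qj; have hm2 := divn_eq m Qj.
have hx : n %% Qj < Qj by rewrite ltn_mod; lia.
set a := n %/ Qj in hn; set b := m %/ Qj in hm2.
set x := n %% Qj in hn hx hg; rewrite hm in hm2.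
have [ab|ba|ab] := ltngtP a b.
- have : a * Qj + Qj <= b * Qj by rewrite addnC -mulSn leq_mul2r ab orbT.
  lia.
- have : b * Qj + Qj <= a * Qj by rewrite addnC -mulSn leq_mul2r ba orbT.
  lia.
- rewrite ab in hn; lia.
Qed.

Lemma samemod n m q : n %% q = m %% q -> n != m -> (n + q <= m) || (m + q <= n).
Proof.
move=> h nm.
have hn := divn_eq n q; have hm := divn_eq m q.
set a := n %/ q in hn; set b := m %/ q in hm. rewrite h in hn.
have [ab|ba|ab] := ltngtP a b.
- have : a * q + q <= b * q by rewrite addnC -mulSn leq_mul2r ab orbT.
  lia.
- have : b * q + q <= a * q by rewrite addnC -mulSn leq_mul2r ba orbT.
  lia.
- rewrite ab in hn; exfalso; move/eqP: nm; apply; lia.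
Qed.

Lemma E_sep_lt k j n m : k < j -> E k n -> E j m -> (n + Nf j < m) || (m + Nf j < n).
Proof.
move=> kj hE /andP[/eqP hm _].
have hPj := P_big j.
have [jn|nj] := leqP j n.
- move: hE => /andP[_ /allP/(_ j)]; rewrite mem_iota => /(_ _) hg.
  have {}hg : good j n by apply: hg; lia.
  apply: (@sepmod n m (Q j) (P j)) => //; lia.
- have := leq_mod m (Q j); rewrite hm => hmm. lia.
Qed.

Lemma E_sep k j n m : E k n -> E j m -> (k != j) || (n != m) ->
  (n + Nf (maxn k j) < m) || (m + Nf (maxn k j) < n).
Proof.
move=> hn hm hne.
have [kj|jk|kj] := ltngtP k j.
- exact: E_sep_lt hn hm.
- rewrite orbC; exact: E_sep_lt hm hn.
- subst j; move: hne; rewrite eqxx /= => hne.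
  have h1 : n %% Q k = m %% Q k.
    by move: hn hm => /andP[/eqP -> _] /andP[/eqP -> _].
  have := samemod h1 hne; have := P_big k; rewrite /Q; lia.
Qed.


Lemma bad_count j N : count (fun n => ~~ good j n) (iota 0 N) * Q j <= 5 * (2 * Nf j + 1) * N.
Proof.
have hP := P_big j; have hQ : 0 < Q j by rewrite /Q; lia.
case: (leqP (P j) (2 * N)) => hPN.
- set p := fun x => (P j - Nf j <= x) && (x <= P j + Nf j).
  have -> : count (fun n => ~~ good j n) (iota 0 N) = count (fun n => p (n %% Q j)) (iota 0 N).
    apply: eq_count => n; rewrite /good /p negb_or -!leqNgt.
    congr (_ && _); lia.
  set d := N %/ Q j.
  have h1 : count (fun n => p (n %% Q j)) (iota 0 N) <= (d.+1) * count p (iota 0 (Q j)).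
    rewrite -count_periodic //; apply: count_iota_mono.
    by apply: ltnW; rewrite ltn_ceil.
  have h2 : count p (iota 0 (Q j)) <= 2 * Nf j + 1.
    apply: leq_trans (count_interval _ _ _) _; lia.
  have h3 : d * Q j <= N by rewrite leq_divM.
  have h4 : count (fun n => p (n %% Q j)) (iota 0 N) <= d.+1 * (2 * Nf j + 1).
    by apply: leq_trans h1 _; rewrite leq_mul2l h2 orbT.
  set c := count _ _ in h1 h4 *.
  have h5 : c * Q j <= d.+1 * (2 * Nf j + 1) * Q j by rewrite leq_mul2r h4 orbT.
  apply: leq_trans h5 _.
  rewrite mulnAC mulSn.
  have : (Q j + d * Q j) <= 5 * N by rewrite /Q in h3 *; lia.
  move=> h6; rewrite [X in _ <= X]mulnAC.
  by rewrite leq_mul2r h6 orbT.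
- have -> : count (fun n => ~~ good j n) (iota 0 N) = 0.
    apply/eqP; rewrite -leqn0 leqNgt -has_count; apply/hasPn => n.
    rewrite mem_iota add0n => /andP[_ hn]; rewrite negbK /good.
    have := leq_mod n (Q j); move=> hm; apply/orP; left; lia.
  by rewrite mul0n.
Qed.

Lemma bad_count2 k j N : k < j ->
  count (fun n => ~~ good j n) (iota 0 N) * (2 ^ j.+1 * Q k) <= N.
Proof.
move=> kj; have := bad_count j N; have := Q_big kj.
set b := count _ _; set a := 5 * (2 * Nf j + 1) => h1 h2.
have ha : 0 < a by rewrite /a; lia.
rewrite -(leq_pmul2l ha); apply: leq_trans h2.
have : b * (a * 2 ^ j.+1 * Q k) <= b * Q j by rewrite leq_mul2l h1 orbT.
lia.
Qed.

Lemma AP_count k N : N %/ Q k <= count (fun n => n %% Q k == P k) (iota 0 N).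
Proof.
have hP := P_big k; have hQ : 0 < Q k by rewrite /Q; lia.
apply: (@leq_trans (count (fun n => n %% Q k == P k) (iota 0 (N %/ Q k * Q k)))); last first.
  by apply: count_iota_mono; rewrite leq_divM.
rewrite (count_periodic (fun x => x == P k)) //.
have -> : count (fun x => x == P k) (iota 0 (Q k)) = 1.
  rewrite (count_uniq_mem _ (iota_uniq _ _)) mem_iota; rewrite /Q; apply/eqP.
  rewrite eqb1; lia.
by rewrite muln1.
Qed.

Lemma E_cover k N : count (fun n => n %% Q k == P k) (iota 0 N) <=
  count (E k) (iota 0 N) + \sum_(j <- iota k.+1 N) count (fun n => ~~ good j n) (iota 0 N).
Proof.
apply: count_cover => n; rewrite mem_iota add0n => /andP[_ nN] hn.
rewrite /E hn /=; case al: (all _ _) => //=.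
move: al => /negbT; rewrite -has_predC => /hasP[j]; rewrite !mem_iota => /andP[h1 h2] hg.
apply/hasP; exists j => //; rewrite mem_iota; lia.
Qed.

End Comb.

Local Open Scope ring_scope.

Lemma geom_sum (R : realType) a c :
  \sum_(j <- iota a c) ((2 : R) ^+ j.+1)^-1 = (2 ^+ a)^-1 - (2 ^+ (a + c))^-1.
Proof.
elim: c a => [|c IH] a; first by rewrite big_nil addn0 subrr.
rewrite /= big_cons IH addSnnS exprS invfM.
set x := ((2:R) ^+ a)^-1; set y := (2 ^+ (a + c.+1))^-1. lra.
Qed.

Lemma geom_le (R : realType) a c :
  \sum_(j <- iota a c) ((2 : R) ^+ j.+1)^-1 <= (2 ^+ a)^-1.
Proof. by rewrite geom_sum lerBlDr lerDl invr_ge0 exprn_ge0. Qed.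

Lemma E_density (R : realType) (Nf : nat -> nat) k N : (4 * Q Nf k <= N)%N ->
  1 / (4 * Q Nf k)%:R <= (count (E Nf k) (iota 0 N))%:R / N%:R :> R.
Proof.
move=> hN.
have hP := P_big Nf k; have hQ : (0 < Q Nf k)%N by rewrite /Q; lia.
have hA := AP_count Nf k N; have hAC := E_cover Nf k N.
have hd : (N < (N %/ Q Nf k).+1 * Q Nf k)%N by rewrite ltn_ceil.
set A := count _ (iota 0 N) in hA hAC; set C := count (E Nf k) _ in hAC *.
set S := \sum_(j <- _) _ in hAC.
set d := (N %/ Q Nf k)%N in hA hd.
set q : R := (Q Nf k)%:R; set n : R := N%:R.
have q0 : 0 < q by rewrite ltr0n.
have hS : S%:R <= n / q / 2.
  rewrite /S natr_sum.
  apply: (@le_trans _ _ (\sum_(j <- iota k.+1 N) (n / q) * ((2 : R) ^+ j.+1)^-1)).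
    rewrite big_seq_cond [X in _ <= X]big_seq_cond; apply: ler_sum => j.
    rewrite andbT mem_iota => /andP[kj _].
    have := bad_count2 Nf N kj; rewrite -(ler_nat R) natrM natrM natrX => h.
    rewrite ler_pdivlMr ?exprn_gt0 // ler_pdivlMr // -mulrA; exact: h.
  rewrite -mulr_sumr; apply: ler_wpM2l; first by rewrite divr_ge0 // ler0n.
  apply: le_trans (geom_le _ _ _) _; rewrite exprS invfM.
  have ht : ((2:R) ^+ k)^-1 <= 1 by rewrite invf_le1 ?exprn_gt0 // exprn_ege1 // ler1n.
  set t := ((2:R) ^+ k)^-1 in ht *; lra.
have hd' : n < (d%:R + 1) * q by rewrite /n /q natr1 -natrM ltr_nat.
have hA' : d%:R <= A%:R :> R by rewrite ler_nat.
have hAC' : A%:R <= C%:R + S%:R :> R by rewrite -natrD ler_nat.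
have hN' : 4 * q <= n by rewrite /q /n -natrM ler_nat.
have hS' : 2 * q * S%:R <= n.
  by move: hS; rewrite ler_pdivlMr // ler_pdivlMr // => h; nra.
have n0 : 0 < n by lra.
have key : n <= C%:R * (4 * q) by nra.
rewrite natrM -/q mul1r ler_pdivlMr // mulrC ler_pdivrMr //; lra.
Qed.

Lemma einf_ge (R : realType) (u : nat -> \bar R) (c : R) N0 :
  (forall N, (N0 <= N)%N -> (c%:E <= u N)%E) -> (c%:E <= limn_einf u)%E.
Proof.
move=> h; rewrite limn_einf_lim.
apply: (@le_trans _ _ (einfs u N0)).
  apply: le_ereal_inf_tmp => _ [n /= hn <-]; exact: h.
rewrite (cvg_lim _ (@cvg_einfs_sup _ u)) //.
by apply: ereal_sup_ubound; exists N0.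
Qed.

Lemma pow2_small (R : realType) (e : R) : 0 < e -> exists K, forall k, (K <= k)%N -> ((2:R) ^+ k)^-1 < e.
Proof.
move=> e0; have he : 0 <= e^-1 by rewrite invr_ge0 ltW.
have hb := archi_boundP he.
exists (Num.bound e^-1) => k hk.
rewrite -(invrK e) ltf_pV2 ?posrE ?exprn_gt0 ?invr_gt0 //.
apply: lt_le_trans hb _.
apply: (@le_trans _ _ (k%:R)); first by rewrite ler_nat.
have : (k < 2 ^ k)%N by rewrite ltn_expl.
by move/ltnW; rewrite -(ler_nat R) natrX.
Qed.

Local Open Scope classical_set_scope.
Local Open Scope ring_scope.

Section Basic.
Variables (R : realType) (K : numFieldType) (X : lmodType K) (nrm : X -> R).
Hypothesis hF : is_Fnorm nrm.

Lemma nrm0 : nrm 0 = 0.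
Proof. by case: hF => h _ _ _; apply/h. Qed.

Lemma nrmN x : nrm (- x) = nrm x.
Proof.
case: hF => _ h _ _.
have h1 : forall y, nrm (- y) <= nrm y.
  by move=> y; rewrite -scaleN1r; apply: h; rewrite normrN normr1.
by apply/eqP; rewrite eq_le h1 /= -{1}(opprK x) h1.
Qed.

Lemma nrm_tri x y : nrm (x + y) <= nrm x + nrm y.
Proof. by case: hF. Qed.

Lemma nrm_ge0 x : 0 <= nrm x.
Proof.
have := nrm_tri x (- x); rewrite subrr nrm0 nrmN; lra.
Qed.

Lemma nrmB x y : nrm (x - y) = nrm (y - x).
Proof. by rewrite -nrmN opprB. Qed.

Lemma nrm_trans x y z : nrm (x - z) <= nrm (x - y) + nrm (y - z).
Proof. have -> : x - z = (x - y) + (y - z) by rewrite addrA subrK. exact: nrm_tri. Qed.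

Lemma nrm_sum (I : Type) (s : seq I) (F : I -> X) :
  nrm (\sum_(i <- s) F i) <= \sum_(i <- s) nrm (F i).
Proof.
elim: s => [|i s IH]; first by rewrite !big_nil nrm0.
rewrite !big_cons; apply: le_trans (nrm_tri _ _) _; exact: lerD.
Qed.

End Basic.

Section Lin.
Variables (K : numFieldType) (X : lmodType K) (D : set X) (A : X -> X).
Hypothesis hlin : linear_op D A.

Lemma Dinf_iter x : dom_inf D A x <-> forall k, D (iter k A x).
Proof.
split => [h k|h n k _]; last exact: h.
exact: (h k.+1 k).
Qed.

Lemma A0 : A 0 = 0.
Proof.
case: hlin => D0 _ _ hA _.
have := hA 0 0 D0 D0; rewrite addr0 => h.
by apply: (addrI (A 0)); rewrite addr0 -h.
Qed.

Lemma iter_add x y : dom_inf D A x -> dom_inf D A y ->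
  forall k, iter k A (x + y) = iter k A x + iter k A y.
Proof.
move=> /Dinf_iter hx /Dinf_iter hy; elim => [//|k IH].
by rewrite !iterS IH; case: hlin => _ _ _ hA _; apply: hA.
Qed.

Lemma Dinf_add x y : dom_inf D A x -> dom_inf D A y -> dom_inf D A (x + y).
Proof.
move=> hx hy; apply/Dinf_iter => k; rewrite iter_add //.
case: hlin => _ hD _ _ _; apply: hD; [exact/(Dinf_iter x).1|exact/(Dinf_iter y).1].
Qed.

Lemma iter0 k : iter k A 0 = 0.
Proof. by elim: k => [//|k IH]; rewrite iterS IH A0. Qed.

Lemma Dinf0 : dom_inf D A 0.
Proof. by apply/Dinf_iter => k; rewrite iter0; case: hlin. Qed.

Lemma Dinf_sum (I : Type) (s : seq I) (F : I -> X) :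
  (forall i, dom_inf D A (F i)) -> dom_inf D A (\sum_(i <- s) F i) /\
  forall k, iter k A (\sum_(i <- s) F i) = \sum_(i <- s) iter k A (F i).
Proof.
move=> hF; elim: s => [|i s [IH1 IH2]].
  rewrite !big_nil; split; first exact: Dinf0.
  by move=> k; rewrite iter0 big_nil.
rewrite !big_cons; split; first exact: Dinf_add (hF i) IH1.
by move=> k; rewrite big_cons (iter_add (hF i) IH1) IH2.
Qed.
End Lin.

Section Thm.
Variables (R : realType) (K : numFieldType) (X : lmodType K) (nrm : X -> R).
Variables (D : set X) (A : X -> X) (X0 : set X) (B : X -> X).
Hypotheses (hF : is_Fnorm nrm) (hC : Fcomplete nrm) (hsep : Fseparable nrm)
  (hlin : linear_op D A)
  (hclos : forall r : nat, (0 < r)%N -> closed_op nrm (dom_pow D A r) (iter r A))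
  (hX0 : X0 `<=` dom_inf D A) (hX0d : Fdense nrm X0)
  (hB : forall x, X0 x -> X0 (B x)) (hAB : forall x, X0 x -> A (B x) = x)
  (hAu : forall x, X0 x -> uncond_conv nrm (fun n => iter n A x))
  (hBu : forall x, X0 x -> uncond_conv nrm (fun n => iter n B x)).

Lemma X0_iterB n x : X0 x -> X0 (iter n B x).
Proof. by move=> hx; elim: n => [//|n IH]; rewrite iterS; apply: hB. Qed.

Lemma iterAB m n y : X0 y ->
  iter m A (iter n B y) = if (m <= n)%N then iter (n - m)%N B y else iter (m - n)%N A y.
Proof.
move=> hy; elim: m n => [|m IH] n; first by case: n.
case: n => [|n]; first by rewrite ?subn0.
have -> : iter n.+1 B y = B (iter n B y) by [].
by rewrite iterSr hAB ?IH ?ltnS ?subSS //; apply: X0_iterB.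
Qed.

Lemma dense_seq : exists y : nat -> X, (forall k, X0 (y k)) /\
  forall x e, 0 < e -> forall L, exists l, (L <= l)%N /\ nrm (y l - x) < e.
Proof.
case: hsep => S [/countable_injP [f finj] dS].
pose g n := if pselect (exists s, S s /\ f s = n) is left h then projT1 (cid h) else 0.
have hg : forall s, S s -> g (f s) = s.
  move=> s Ss; rewrite /g; case: pselect => [h|h]; last by exfalso; apply: h; exists s.
  case: (cid h) => s' [Ss' fs'] /=; apply: finj => //; by rewrite inE.
have zP : forall n m : nat, exists z, X0 z /\ nrm (z - g n) < (m.+1%:R)^-1.
  by move=> n m; apply: hX0d; rewrite invr_gt0 ltr0n.
pose y l := projT1 (cid (zP (logn 2 l.+1) l)).
exists y; split; first by move=> k; rewrite /y; case: cid => z [].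
move=> x e e0 L.
have e2 : 0 < e / 2 by lra.
have [s [Ss hs]] := dS x _ e2.
have [K0 hK] := pow2_small e2.
pose t := (2 ^ f s * (2 * (L + 2 ^ K0) + 1))%N.
have t0 : (0 < t)%N by rewrite muln_gt0 expn_gt0; lia.
exists t.-1; split.
  have : (1 <= 2 ^ f s)%N by rewrite expn_gt0.
  rewrite /t => h; nia.
have ht : t.-1.+1 = t by rewrite prednK.
have hlog : logn 2 t.-1.+1 = f s.
  rewrite ht /t lognM ?expn_gt0 //; last by lia.
  by rewrite pfactorK // logn_coprime ?addn0 // coprime2n oddD oddM.
have := projT2 (cid (zP (logn 2 t.-1.+1) t.-1)); rewrite -/(y t.-1) hlog ht hg // => -[_ hz].
apply: le_lt_trans (nrm_trans hF _ (g (f s)) _) _; rewrite hg //.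
have : ((t%:R : R))^-1 <= ((2:R) ^+ K0)^-1.
  rewrite lef_pV2 ?posrE ?ltr0n ?exprn_gt0 //.
  rewrite -natrX ler_nat /t.
  have : (2 ^ K0 <= 2 * (L + 2 ^ K0) + 1)%N by lia.
  move=> h; apply: leq_trans h _; rewrite leq_pmull // expn_gt0 //.
have := hK K0 (leqnn _); lra.
Qed.

Definition eps (j : nat) : R := ((2:R) ^+ j.+1 * (j.+1)%:R)^-1.

Lemma eps_gt0 j : 0 < eps j.
Proof. by rewrite /eps invr_gt0 mulr_gt0 ?exprn_gt0 ?ltr0n. Qed.

Lemma eps_le j : eps j <= ((2:R) ^+ j.+1)^-1.
Proof.
rewrite /eps invfM ler_piMr ?invr_ge0 ?exprn_ge0 //.
by rewrite invf_le1 ?ltr0n // ler1n.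
Qed.

Lemma epsmax_sum l M : \sum_(0 <= k < M) eps (maxn k l) <= 2 * ((2:R) ^+ l)^-1.
Proof.
have h0 : forall k, 0 <= eps k by move=> k; apply: ltW; exact: eps_gt0.
apply: (@le_trans _ _ (\sum_(0 <= k < l + M) eps (maxn k l))).
  rewrite (@big_cat_nat _ _ _ M 0 (l + M)) //=; last by rewrite leq_addl.
  by rewrite lerDl sumr_ge0.
rewrite (@big_cat_nat _ _ _ l 0 (l + M)) //=; last by rewrite leq_addr.
have -> : \sum_(0 <= k < l) eps (maxn k l) = \sum_(0 <= k < l) eps l.
  rewrite big_seq [RHS]big_seq; apply: eq_bigr => k; rewrite mem_index_iota => /andP[_ hk].
  by rewrite (maxn_idPr (ltnW hk)).
rewrite sumr_const_nat subn0.
have h1 : eps l *+ l <= ((2:R) ^+ l.+1)^-1.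
  have e1 : eps l * (l.+1)%:R = ((2:R) ^+ l.+1)^-1.
    by rewrite /eps invfM -mulrA mulVf ?mulr1 // pnatr_eq0.
  apply: (@le_trans _ _ (eps l * (l.+1)%:R)).
    by rewrite -[eps l *+ l]mulr_natr; apply: ler_wpM2l; [exact: h0 | rewrite ler_nat].
  by rewrite e1.
have h2 : \sum_(l <= k < l + M) eps (maxn k l) <= ((2:R) ^+ l)^-1.
  apply: le_trans (geom_le R l M).
  rewrite /index_iota addnC addnK; rewrite big_seq [X in _ <= X]big_seq.
  apply: ler_sum => k; rewrite mem_iota => /andP[hk _].
  by rewrite (maxn_idPl hk) eps_le.
have h3 : ((2:R) ^+ l.+1)^-1 <= ((2:R) ^+ l)^-1.
  by rewrite lef_pV2 ?posrE ?exprn_gt0 // ler_eXn2l // ltr1n.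
lra.
Qed.

Section WithY.
Variable y : nat -> X.
Hypothesis hy : forall k, X0 (y k).

Lemma tauP k j : exists N : nat, forall s, uniq s -> all (fun n => N < n)%N s ->
  nrm (\sum_(n <- s) iter n A (y k)) < eps j /\ nrm (\sum_(n <- s) iter n B (y k)) < eps j.
Proof.
have [N1 [_ h1]] := hAu (hy k) (eps_gt0 j).
have [N2 [_ h2]] := hBu (hy k) (eps_gt0 j).
exists (maxn N1 N2) => s us al.
have al1 : all (fun n => N1 < n)%N s.
  by apply: sub_all al => n; rewrite /= gtn_max => /andP[a b].
have al2 : all (fun n => N2 < n)%N s.
  by apply: sub_all al => n; rewrite /= gtn_max => /andP[a b].
by split; [apply: h1 | apply: h2].
Qed.

Definition tau k j := projT1 (cid (tauP k j)).
Definition Nf j := (\max_(k < j.+1) tau k j)%N.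

Lemma tau_bound k j s : (k <= j)%N -> uniq s -> (forall n, n \in s -> Nf j < n)%N ->
  nrm (\sum_(n <- s) iter n A (y k)) < eps j /\ nrm (\sum_(n <- s) iter n B (y k)) < eps j.
Proof.
move=> kj us hs; apply: (projT2 (cid (tauP k j))) => //; apply/allP => n /hs.
have hk : (k < j.+1)%N by [].
have := @leq_bigmax _ (fun i : 'I_j.+1 => tau i j) (Ordinal hk).
rewrite /Nf /= => h1 h2; exact: leq_ltn_trans h1 h2.
Qed.

Definition EE := E Nf.

Definition Tm m M := \sum_(0 <= k < M) \sum_(0 <= n < M | EE k n) iter m A (iter n B (y k)).
Definition Z M := \sum_(0 <= k < M) \sum_(0 <= n < M | EE k n) iter n B (y k).

Lemma Z_dom M : dom_inf D A (Z M) /\ forall m, iter m A (Z M) = Tm m M.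
Proof.
have hin : forall k, dom_inf D A (\sum_(0 <= n < M | EE k n) iter n B (y k)) /\
    forall m, iter m A (\sum_(0 <= n < M | EE k n) iter n B (y k)) =
              \sum_(0 <= n < M | EE k n) iter m A (iter n B (y k)).
  move=> k; rewrite -big_filter; have [h1 h2] := Dinf_sum hlin (seq.filter (EE k) (index_iota 0 M))
     (F := fun n => iter n B (y k)) (fun n => hX0 (X0_iterB n (hy k))).
  by split => // m; rewrite h2 big_filter.
have [h1 h2] := Dinf_sum hlin (index_iota 0 M) (F := fun k => \sum_(0 <= n < M | EE k n) iter n B (y k)) (fun k => (hin k).1).
split => // m; rewrite /Z h2; apply: eq_bigr => k _; exact: (hin k).2.
Qed.

Lemma Tm_split m M M' : (M <= M')%N -> Tm m M' - Tm m M =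
  \sum_(0 <= k < M') \sum_(M <= n < M' | EE k n) iter m A (iter n B (y k)).
Proof.
move=> hMM'.
have h1 : Tm m M = \sum_(0 <= k < M') \sum_(0 <= n < M | EE k n) iter m A (iter n B (y k)).
  rewrite /Tm (@big_cat_nat _ _ _ M 0 M') //= [X in _ = _ + X]big1_seq ?addr0 //.
  move=> k /andP[_]; rewrite mem_index_iota => /andP[hk _]; apply: big1_seq => n /andP[hE].
  rewrite mem_index_iota => /andP[_ hn]; exfalso; have := E_low hE; lia.
rewrite h1 /Tm -sumrB; apply: eq_bigr => k _.
by rewrite (@big_cat_nat _ _ _ M 0 M') //= addrC addrK.
Qed.

Lemma block_B m M M' k : (m < M)%N ->
  \sum_(M <= n < M' | EE k n) iter m A (iter n B (y k)) =
  \sum_(d <- [seq (n - m)%N | n <- [seq n <- index_iota M M' | EE k n]]) iter d B (y k).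
Proof.
move=> hm; rewrite big_map big_filter !(big_seq_cond (fun n => EE k n)).
apply: eq_bigr => n /andP[]; rewrite mem_index_iota => /andP[hn _] _.
by rewrite iterAB // ifT //; lia.
Qed.

Lemma T_cauchy m e : 0 < e -> exists M0, forall M M', (M0 <= M)%N -> (M <= M')%N ->
  nrm (Tm m M' - Tm m M) < e.
Proof.
move=> e0; have e2 : 0 < e / 2 by lra.
have [K0 hK] := pow2_small e2.
pose KK := maxn K0 m.
exists (m + Nf KK).+1 => M M' hM hMM'.
rewrite Tm_split //.
apply: le_lt_trans (nrm_sum hF _ _) _.
apply: (@le_lt_trans _ _ (\sum_(0 <= k < M') eps (maxn k KK))); last first.
  apply: le_lt_trans (epsmax_sum KK M') _.
  have := hK KK (leq_maxl _ _); lra.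
apply: ler_sum => k _.
rewrite block_B; last by lia.
set s := [seq (n - m)%N | n <- _].
have hu : uniq s.
  rewrite map_inj_in_uniq ?filter_uniq ?iota_uniq //.
  move=> a b; rewrite !mem_filter !mem_index_iota => /andP[_ /andP[ha _]] /andP[_ /andP[hb _]].
  lia.
have hb : forall d, d \in s -> (Nf (maxn k KK) < d)%N.
  move=> d /mapP[n]; rewrite mem_filter mem_index_iota => /andP[hE /andP[hn _]] ->.
  have := E_low hE; have hKK : (m <= KK)%N by rewrite /KK leq_maxr.
  case: (leqP k KK) => hk.
  + lia.
  + lia.
exact: ltW (tau_bound (leq_maxl k KK) hu hb).2.
Qed.


Lemma block_genB (C : pred nat) (r : seq nat) k m : (forall n, C n -> m < n)%N ->
  \sum_(n <- r | C n) iter m A (iter n B (y k)) =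
  \sum_(d <- [seq (n - m)%N | n <- [seq n <- r | C n]]) iter d B (y k).
Proof.
move=> hCn; rewrite big_map big_filter; apply: eq_bigr => n hn.
by rewrite iterAB // ifT //; have := hCn n hn; lia.
Qed.

Lemma block_genA (C : pred nat) (r : seq nat) k m : (forall n, C n -> n < m)%N ->
  \sum_(n <- r | C n) iter m A (iter n B (y k)) =
  \sum_(d <- [seq (m - n)%N | n <- [seq n <- r | C n]]) iter d A (y k).
Proof.
move=> hCn; rewrite big_map big_filter; apply: eq_bigr => n hn.
by rewrite iterAB // ifF //; have := hCn n hn; lia.
Qed.

Lemma uniq_shiftB (C : pred nat) (r : seq nat) m : uniq r -> (forall n, C n -> m < n)%N ->
  uniq [seq (n - m)%N | n <- [seq n <- r | C n]].
Proof.
move=> ur hCn; rewrite map_inj_in_uniq ?filter_uniq //.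
move=> a b; rewrite !mem_filter => /andP[/hCn ha _] /andP[/hCn hb _]; lia.
Qed.

Lemma uniq_shiftA (C : pred nat) (r : seq nat) m : uniq r -> (forall n, C n -> n < m)%N ->
  uniq [seq (m - n)%N | n <- [seq n <- r | C n]].
Proof.
move=> ur hCn; rewrite map_inj_in_uniq ?filter_uniq //.
move=> a b; rewrite !mem_filter => /andP[/hCn ha _] /andP[/hCn hb _]; lia.
Qed.

Lemma T_error l m M : EE l m -> (m < M)%N -> nrm (Tm m M - y l) <= 4 * ((2:R) ^+ l)^-1.
Proof.
move=> hlm hmM.
have hl := E_low hlm.
have hsplit : Tm m M = \sum_(0 <= k < M) \sum_(0 <= n < M | EE k n && (n != m))
    iter m A (iter n B (y k)) + y l.
  rewrite /Tm.
  under eq_bigr => k _ do rewrite (bigID (fun n => n != m)).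
  rewrite big_split /=; congr (_ + _).
  have h1 : forall k, \sum_(0 <= n < M | EE k n && ~~ (n != m)) iter m A (iter n B (y k)) =
      if k == l then y l else 0.
    move=> k.
    rewrite (eq_bigl (fun n => (n == m) && EE k n)); last by move=> n; rewrite negbK andbC.
    rewrite big_mkcondr big_nat1_eq ifT; last by lia.
    case: eqP => [->|hkl]; first by rewrite hlm iterAB // leqnn subnn.
    case hkm: (EE k m) => //; exfalso.
    have := E_sep hkm hlm; rewrite eqxx orbF; move/eqP: hkl => hkl.
    by rewrite hkl => /(_ isT); lia.
  under eq_bigr => k _ do rewrite h1.
  rewrite -big_mkcond big_nat1_eq ifT //; lia.
rewrite hsplit addrK.
apply: le_trans (nrm_sum hF _ _) _.
apply: (@le_trans _ _ (\sum_(0 <= k < M) 2 * eps (maxn k l))).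
  apply: ler_sum => k _.
  rewrite (bigID (fun n => (m < n)%N)) /=.
  apply: le_trans (nrm_tri hF _ _) _.
  have hsepk : forall n, EE k n -> n != m ->
      (n + Nf (maxn k l) < m)%N || (m + Nf (maxn k l) < n)%N.
    by move=> n hn hnm; apply: (@E_sep Nf k l n m hn hlm); rewrite hnm orbT.
  rewrite block_genB; last by move=> n /andP[].
  rewrite block_genA; last first.
    by move=> n /andP[/andP[hn hnm]]; rewrite -leqNgt leq_eqVlt (negbTE hnm).
  rewrite mulr2n mulrDl mul1r.
  apply: lerD; apply: ltW.
  - apply: (tau_bound (leq_maxl k l) _ _).2.
      by apply: uniq_shiftB; [exact: iota_uniq| move=> n /andP[]].
    move=> d /mapP[n]; rewrite mem_filter => /andP[/andP[/andP[hn hnm] hmn] _] ->.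
    have := hsepk n hn hnm; lia.
  - apply: (tau_bound (leq_maxl k l) _ _).1.
      apply: uniq_shiftA; first exact: iota_uniq.
      by move=> n /andP[/andP[hn hnm]]; rewrite -leqNgt leq_eqVlt (negbTE hnm).
    move=> d /mapP[n]; rewrite mem_filter => /andP[/andP[/andP[hn hnm] hmn] _] ->.
    have := hsepk n hn hnm; lia.
rewrite -mulr_sumr.
have := epsmax_sum l M; lra.
Qed.


Lemma T_lim m : exists g : X, forall e, 0 < e -> exists N, forall M, (N <= M)%N -> nrm (Tm m M - g) < e.
Proof.
apply: hC => e e0.
have [M0 h] := T_cauchy m e0.
exists M0 => a b ha hb.
case: (leqP a b) => hab.
- by rewrite nrmB //; apply: h.
- by apply: h => //; apply: ltnW.
Qed.

Definition g m := projT1 (cid (T_lim m)).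
Lemma gP m e : 0 < e -> exists N, forall M, (N <= M)%N -> nrm (Tm m M - g m) < e.
Proof. exact: (projT2 (cid (T_lim m))). Qed.

Definition f := g 0.

Lemma f_dom m : (0 < m)%N -> dom_pow D A m f /\ iter m A f = g m.
Proof.
move=> hm; apply: (hclos hm) => e e0.
have [N1 h1] := gP 0 e0; have [N2 h2] := gP m e0.
exists (Z (maxn N1 N2)); split.
- by have [h _] := Z_dom (maxn N1 N2); exact: h m.
- have [_ h] := Z_dom (maxn N1 N2); have := h 0; rewrite /= => ->.
  by apply: h1; rewrite leq_maxl.
- have [_ h] := Z_dom (maxn N1 N2); rewrite h.
  by apply: h2; rewrite leq_maxr.
Qed.

Lemma f_err l m : EE l m -> nrm (iter m A f - y l) <= 4 * ((2:R) ^+ l)^-1.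
Proof.
move=> hlm; have hl := E_low hlm.
have hm : (0 < m)%N by lia.
rewrite (f_dom hm).2.
apply/ler_addgt0Pr => d d0.
have [N h] := gP m d0.
pose M := maxn N m.+1.
apply: le_trans (nrm_trans hF _ (Tm m M) _) _.
have h1 : nrm (g m - Tm m M) < d by rewrite nrmB //; apply: h; rewrite leq_maxl.
have h2 := T_error hlm (leq_maxr N m.+1).
lra.
Qed.


Lemma count_natr (a : pred nat) (s : seq nat) : (count a s)%:R = \sum_(i <- s) ((a i)%:R : R).
Proof.
elim: s => [|i s IH]; first by rewrite big_nil.
by rewrite big_cons /= natrD IH.
Qed.

Lemma final_fhc (hyd : forall x e, 0 < e -> forall L, exists l, (L <= l)%N /\ nrm (y l - x) < e) :
  freq_hypercyclic nrm D A.
Proof.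
exists f; split; first by have [h _] := f_dom (ltnSn 0); exact: (h 0%N).
split; first by move=> n hn; have [h _] := f_dom (ltn0Sn n); exact: (h n).
move=> U hU [u Uu].
have [e [e0 he]] := hU u Uu.
have e8 : 0 < e / 8 by lra.
have [K0 hK] := pow2_small e8.
have e2 : 0 < e / 2 by lra.
have [l [hl hyl]] := hyd u _ e2 K0.
have hsub : forall m, EE l m -> U (iter m A f).
  move=> m hm; apply: he.
  apply: le_lt_trans (nrm_trans hF _ (y l) _) _.
  have := f_err hm; have := hK l hl; lra.
have hQ : (0 < Q Nf l)%N by rewrite /Q; have := P_big Nf l; lia.
have c0 : 0 < 1 / (4 * Q Nf l)%:R :> R by rewrite divr_gt0 // ltr0n; lia.
apply: (@lt_le_trans _ _ (1 / (4 * Q Nf l)%:R)%:E); first by rewrite lte_fin.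
apply: (einf_ge (N0 := (4 * Q Nf l)%N)) => N hN.
rewrite lee_fin.
apply: le_trans (E_density R hN) _.
have hN0 : (0 < N)%N by lia.
apply: ler_wpM2r; first by rewrite invr_ge0 ler0n.
apply: (@le_trans _ _ (count (EE l) (iota 1 N))%:R).
  rewrite ler_nat.
  apply: (@leq_trans (count (EE l) (iota 0 N.+1))); first exact: count_iota_mono.
  rewrite -[N.+1]add1n iotaD count_cat /= add0n.
  have -> : EE l 0 = false by apply/negbTE/negP => /E_low; lia.
  by [].
rewrite count_natr /index_iota subn1 /=.
apply: ler_sum => n _.
case hn: (EE l n) => /=; last by case: ifP.
by rewrite asboolT //; apply: hsub.
Qed.

End WithY.
End Thm.

Lemma thm_for (R : realType) (K : numFieldType) : theorem2p1_for R K.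
Proof.
move=> X nrm D A [hF hC] hsep hlin hD hclosA hclos X0 B hX0 hX0d hB hAB hAu hBu.
have [y [hy hyd]] := dense_seq hF hsep hX0d.
eapply final_fhc; eassumption.
Qed.

Local Open Scope ring_scope.
Local Open Scope complex_scope.

Theorem theorem2p1 (R : realType) :
  theorem2p1_for R R /\ theorem2p1_for R R[i].
Proof. split; exact: thm_for. Qed.
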